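(* Let $j\in\mathbb{N}$ and $r\in\mathbb{N}_0$. Then \[c_j^{(r)}=\sum_{i=0}^{r}\binom{r}{i} c_{j+i}.\]
   Context: For $j,n\in\mathbb{N}$, $c_j(n)$ is the number of ordered $j$-tuples of integers each $\ge 2$ with product $n$. The associated divisor functions are defined by $c_j^{(0)}=c_j$ and $c_j^{(r)}(n)=\sum_{m\mid n}c_j^{(r-1)}(m)$ for $r,n\in\mathbb{N}$. *)

(* Defs.v *)
From mathcomp Require Import all_boot.
Set Implicit Arguments. Unset Strict Implicit. Unset Printing Implicit Defensive.

(* c j n = number of ordered j-tuples (t_0,...,t_{j-1}) of integers >= 2 with
   product n.  For n >= 1 every such factor lies in [2, n], so enumerating
   tuples with entries in 'I_n.+1 = {0..n} is exhaustive. (For n = 0 the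
   informal count is infinite; the statement only uses n >= 1.) *)
Definition c (j n : nat) : nat :=
  #|[set t : {ffun 'I_j -> 'I_n.+1} |
      [forall i, 2 <= t i] && (\prod_(i < j) (t i : nat) == n)]|.

Fixpoint cr (r j n : nat) : nat :=
  match r with
  | 0 => c j n
  | r'.+1 => \sum_(m <- divisors n) cr r' j m
  end.

(* Main.v *)
Require Import Defs.
From mathcomp Require Import all_boot.
Set Implicit Arguments. Unset Strict Implicit. Unset Printing Implicit Defensive.

Definition F (N j m : nat) : nat :=
  \sum_(t : {ffun 'I_j -> 'I_N.+1})
     ([forall i, 2 <= t i] && (\prod_(i < j) (t i : nat) == m) : nat).

Lemma cF j n : c j n = F n j n.
Proof.
rewrite /c /F cardsE -sum1_card big_mkcond /=.
by apply: eq_bigr => t _; rewrite unfold_in; case: (_ && _).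
Qed.

Lemma F0 N m : F N 0 m = (m == 1).
Proof.
rewrite /F (eq_bigr (fun _ => (m == 1 : nat))); last first.
  move=> t _; rewrite big_ord0.
  have -> : [forall i, 2 <= t i] = true by apply/forallP => -[].
  by rewrite eq_sym.
by rewrite sum_nat_const card_ffun !card_ord mul1n.
Qed.

Lemma mul_eq x p m : 0 < x -> (x * p == m) = (x %| m) && (p == m %/ x).
Proof.
move=> x0; apply/eqP/andP => [<-|[d /eqP ->]].
  by rewrite dvdn_mulr // mulKn.
by rewrite mulnC divnK.
Qed.

Lemma Fsplit N j m :
  F N j.+1 m = \sum_(x < N.+1 | (2 <= x) && (x %| m)) F N j (m %/ x).
Proof.
pose h (p : 'I_N.+1 * {ffun 'I_j -> 'I_N.+1}) : {ffun 'I_j.+1 -> 'I_N.+1} :=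
  [ffun i => if unlift ord0 i is Some k then p.2 k else p.1].
pose g (t : {ffun 'I_j.+1 -> 'I_N.+1}) := (t ord0, [ffun k => t (lift ord0 k)]).
rewrite /F (reindex h); last first.
  exists g => [[x u] _|t _].
    rewrite /g /h /= !ffunE unlift_none; congr pair.
    by apply/ffunP => k; rewrite !ffunE liftK.
  apply/ffunP => i; rewrite /g /h !ffunE /=.
  by case: (unliftP ord0 i) => [k ->|->]; rewrite ?ffunE.
pose G (t : {ffun 'I_j.+1 -> 'I_N.+1}) :=
  ([forall i, 2 <= t i] && (\prod_(i < j.+1) (t i : nat) == m) : nat).
transitivity (\sum_(x < N.+1) \sum_(u : {ffun 'I_j -> 'I_N.+1}) G (h (x, u))).
  by rewrite pair_big /=; apply: eq_big => [[x u]|[x u] _].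
rewrite [RHS]big_mkcond /=; apply: eq_bigr => x _.
have hx : forall u : {ffun 'I_j -> 'I_N.+1},
   ([forall i, 2 <= h (x, u) i] && (\prod_(i < j.+1) (h (x, u) i : nat) == m)) =
   (2 <= x) && ([forall i, 2 <= u i] && ((x : nat) * \prod_(i < j) (u i : nat) == m)).
  move=> u; rewrite big_ord_recl /h !ffunE unlift_none /=.
  rewrite (eq_bigr (fun i => (u i : nat))); last by move=> i _; rewrite ffunE liftK.
  rewrite andbA; congr andb.
  apply/forallP/andP => [H|[H1 /forallP H2] i].
    split; first by have := H ord0; rewrite ffunE unlift_none.
    by apply/forallP => k; have := H (lift ord0 k); rewrite ffunE liftK.
  by rewrite ffunE; case: (unliftP ord0 i) => [k _|_].
rewrite /G; under eq_bigr do rewrite hx.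
case: (leqP 2 x) => x2 /=; last by rewrite big1.
rewrite (eq_bigr (fun u : {ffun 'I_j -> 'I_N.+1} => ([forall i, 2 <= u i] && ((x %| m) && (\prod_(i < j) (u i : nat) == m %/ x)) : nat))); last first.
  by move=> u _; rewrite mul_eq //; apply: leq_trans x2.
case: (x %| m) => /=; last by rewrite big1 // => u _; rewrite andbF.
by [].
Qed.

Lemma sum_widen N m (G : nat -> nat) : 0 < m -> m <= N ->
  \sum_(x < N.+1 | (2 <= x) && (x %| m)) G x =
  \sum_(x < m.+1 | (2 <= x) && (x %| m)) G x.
Proof.
move=> m0 mN; rewrite -!(big_mkord (fun x => (2 <= x) && (x %| m))).
rewrite [RHS](big_nat_widen _ _ _ _ _ (_ : m.+1 <= N.+1)) //.
apply: eq_bigl => x; case d: (x %| m); rewrite ?andbF //.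
have -> : x < m.+1 by rewrite ltnS dvdn_leq.
by case: (1 < x).
Qed.

Lemma Findep j : forall N m, 0 < m -> m <= N -> F N j m = F m j m.
Proof.
elim: j => [|j IH] N m m0 mN; first by rewrite !F0.
rewrite !Fsplit (@sum_widen N m (fun x => F N j (m %/ x))) //.
apply: eq_bigr => x /andP[x2 d].
have x0 : 0 < x by apply: leq_trans x2.
have q0 : 0 < m %/ x by rewrite divn_gt0 // dvdn_leq.
rewrite (IH N) ?(IH m) //; first exact: leq_div.
exact: leq_trans (leq_div _ _) mN.
Qed.

Lemma crec j n : 0 < n ->
  c j.+1 n = \sum_(x < n.+1 | (2 <= x) && (x %| n)) c j (n %/ x).
Proof.
move=> n0; rewrite cF Fsplit; apply: eq_bigr => x /andP[x2 d].
have x0 : 0 < x by apply: leq_trans x2.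
have q0 : 0 < n %/ x by rewrite divn_gt0 // dvdn_leq.
by rewrite cF Findep //; exact: leq_div.
Qed.

Lemma sum_div n (f : nat -> nat) : 0 < n ->
  \sum_(m <- divisors n) f m = \sum_(0 <= m < n.+1 | m %| n) f m.
Proof.
move=> n0; rewrite -[RHS]big_filter; apply: perm_big.
apply: uniq_perm; first exact: divisors_uniq.
  by rewrite filter_uniq // iota_uniq.
move=> d; rewrite mem_filter mem_iota -dvdn_divisors // add0n.
by case d_n: (d %| n) => //=; rewrite ltnS dvdn_leq.
Qed.

Lemma sum_div_rev n (f : nat -> nat) : 0 < n ->
  \sum_(m <- divisors n) f (n %/ m) = \sum_(m <- divisors n) f m.
Proof.
move=> n0; rewrite -(big_map (fun m => n %/ m) xpredT f).
apply: perm_big; apply: uniq_perm.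
- rewrite map_inj_in_uniq ?divisors_uniq // => a b.
  rewrite -!dvdn_divisors // => da db e.
  have a0 : 0 < a by case: a da {e} => //; rewrite dvd0n (gtn_eqF n0).
  have b0 : 0 < b by case: b db {e} => //; rewrite dvd0n (gtn_eqF n0).
  have q0 : 0 < n %/ a by rewrite divn_gt0 // dvdn_leq.
  apply/eqP; rewrite -(eqn_pmul2l q0); apply/eqP.
  by rewrite {2}e mulnC divnK // mulnC divnK.
- exact: divisors_uniq.
move=> d; apply/mapP/idP => [[a] |].
  by rewrite -!dvdn_divisors // => da ->; apply: dvdn_div.
rewrite -dvdn_divisors // => dd; exists (n %/ d).
  by rewrite -dvdn_divisors // dvdn_div.
have d0 : 0 < d by case: d dd => //; rewrite dvd0n (gtn_eqF n0).
have q0 : 0 < n %/ d by rewrite divn_gt0 // dvdn_leq.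
apply/eqP; rewrite -(eqn_pmul2r q0); apply/eqP.
by rewrite divnK ?dvdn_div // mulnC divnK.
Qed.

Lemma split_g n (g : nat -> nat) : 0 < n ->
  \sum_(0 <= m < n.+1 | m %| n) g (n %/ m) =
  g n + \sum_(x < n.+1 | (2 <= x) && (x %| n)) g (n %/ x).
Proof.
move=> n0.
rewrite -[X in _ = _ + X](big_mkord (fun x => (2 <= x) && (x %| n)) (fun x => g (n %/ x))).
rewrite [LHS](@big_cat_nat _ _ _ 2) // [X in _ = _ + X](@big_cat_nat _ _ _ 2) //.
have A : \sum_(0 <= m < 2 | m %| n) g (n %/ m) = g n.
  by rewrite big_mkcond !big_nat_recl // big_geq //= dvd0n (gtn_eqF n0) dvd1n divn1 addn0.
have B : \sum_(0 <= m < 2 | (2 <= m) && (m %| n)) g (n %/ m) = 0.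
  by rewrite big_mkcond !big_nat_recl // big_geq.
rewrite A B /= add0n; congr addn.
rewrite big_nat_cond [RHS]big_nat_cond; apply: eq_bigl => m.
by case: (2 <= m).
Qed.

Lemma Dstep j n : 0 < n ->
  \sum_(m <- divisors n) c j m = c j n + c j.+1 n.
Proof.
move=> n0; rewrite -sum_div_rev // (sum_div (fun m => c j (n %/ m)) n0).
exact: (etrans (split_g (c j) n0) (congr1 (addn (c j n)) (esym (crec j n0)))).
Qed.

Theorem lemma12 (j r n : nat) : 0 < j -> 0 < n ->
  cr r j n = \sum_(0 <= i < r.+1) 'C(r, i) * c (j + i) n.
Proof.
move=> _; elim: r n => [|r IH] n n0.
  by rewrite big_nat1 bin0 mul1n addn0.
rewrite [LHS]/= big_seq.
rewrite [LHS](eq_bigr (fun m => \sum_(0 <= i < r.+1) 'C(r, i) * c (j + i) m)); last first.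
  move=> m dm; apply: IH; have : m %| n by rewrite dvdn_divisors.
  by case: m {dm} => //; rewrite dvd0n (gtn_eqF n0).
rewrite -big_seq exchange_big /=.
rewrite [LHS](eq_bigr (fun i => 'C(r, i) * c (j + i) n + 'C(r, i) * c (j + i).+1 n)); last first.
  by move=> i _; rewrite -big_distrr /= (Dstep _ n0) mulnDr.
rewrite big_split /= big_nat_recl // [in RHS]big_nat_recl // bin0 !mul1n !addn0 -addnA.
congr addn.
rewrite [RHS](eq_bigr (fun i => 'C(r, i.+1) * c (j + i).+1 n + 'C(r, i) * c (j + i).+1 n)); last first.
  by move=> i _; rewrite binS mulnDl addnS.
rewrite [RHS]big_split; congr addn.
rewrite [RHS]big_nat_recr // bin_small // mul0n /= addn0.
by apply: eq_bigr => i _; rewrite addnS.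
Qed.
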